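(* Let $d$ be an integer and $x$ a real number with $0<d\leqslant x/2$. For every integer $k$ with $K_d-d<k\leqslant K_d$, $$d^2\lfloor x/k\rfloor+\frac{2dx}{\lfloor x/k\rfloor}-x^2F(x/k)=2d\sqrt{dx}+kd-\frac{k^3}{3x}+O(d^{5/2}x^{-1/2}),$$ with an absolute implied constant.
   Context: $\lfloor\cdot\rfloor$ denotes the integer part. For an integer $d\geqslant 0$ and real $x>0$, $K_d=K_d(x)=\big\lfloor \big(d+\sqrt{d^2+4dx}\,\big)/2\big\rfloor$. For real $t$, $F(t)=\sum_{n>t-1}\frac{1}{n^2(n+1)^2}$, summed over positive integers $n>t-1$. *)

(* Defs.v *)
From Stdlib Require Import Reals Lra ZArith.
From Coquelicot Require Import Coquelicot.
Open Scope R_scope.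

(* Integer part (floor) of a real: Int_part r = up r - 1 = floor r. *)
Definition floorR (r : R) : Z := Int_part r.

Definition K (d : Z) (x : R) : Z :=
  floorR ((IZR d + sqrt (IZR d ^ 2 + 4 * IZR d * x)) / 2).

Definition F_term (t : R) (n : nat) : R :=
  if Rlt_dec (t - 1) (INR n) then
    (if Nat.eqb n 0 then 0 else 1 / (INR n ^ 2 * (INR n + 1) ^ 2))
  else 0.

Definition F (t : R) : R := Series (F_term t).

(* Main.v *)
Require Import Defs.
From Stdlib Require Import Reals Lra Lia Psatz ZArith.
From Coquelicot Require Import Coquelicot.
Open Scope R_scope.
Lemma tele_series (h : R -> R) (Q : nat) :
  (1 <= Q)%nat ->
  (forall m, 1 <= m -> Rabs (h m) <= / m) ->
  is_series (fun n => (if Nat.leb Q n then h (INR n) else h (INR Q)) -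
                      (if Nat.leb Q (S n) then h (INR (S n)) else h (INR Q))) (h (INR Q)).
Proof.
  intros HQ Hh.
  set (b := fun n => if Nat.leb Q n then h (INR n) else h (INR Q)).
  change (is_series (fun n => b n - b (S n)) (h (INR Q))).
  assert (Hs : forall N, sum_n (fun n => b n - b (S n)) N = b O - b (S N)).
  { induction N. - rewrite sum_O. reflexivity.
    - rewrite sum_Sn, IHN. unfold plus; simpl. ring. }
  assert (Hb0 : b O = h (INR Q)).
  { unfold b. destruct Q; [lia|]. reflexivity. }
  assert (Hlim : is_lim_seq b 0).
  { apply is_lim_seq_le_le_loc with (u := fun n => - / INR n) (w := fun n => / INR n).
    - exists 1%nat. intros n Hn. apply le_INR in Hn. simpl in Hn.
      unfold b. destruct (Nat.leb Q n) eqn:E.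
      + pose proof (Hh (INR n) Hn) as H. apply Rabs_le_between in H; lra.
      + apply Nat.leb_gt in E. apply lt_INR in E.
        pose proof (Hh (INR Q) ltac:(lra)) as H. apply Rabs_le_between in H.
        assert (/ INR Q <= / INR n) by (apply Rinv_le_contravar; lra).
        lra.
    - replace (Finite 0) with (Rbar_opp (Rbar_inv p_infty)) by (simpl; f_equal; ring).
      apply -> is_lim_seq_opp.
      apply is_lim_seq_inv. apply is_lim_seq_INR. discriminate.
    - replace (Finite 0) with (Rbar_inv p_infty) by reflexivity.
      apply is_lim_seq_inv. apply is_lim_seq_INR. discriminate. }
  assert (H2 : is_lim_seq (fun N => b O - b (S N)) (b O - 0)).
  { apply is_lim_seq_minus'. apply is_lim_seq_const. apply is_lim_seq_incr_1 in Hlim. exact Hlim. }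
  eapply is_lim_seq_ext in H2.
  2: { intro N. symmetry. apply Hs. }
  rewrite Rminus_0_r, Hb0 in H2.
  exact H2.
Qed.
Lemma termU (n : R) : 1 <= n ->
  1 / (n ^ 2 * (n + 1) ^ 2) <= 1 / (3 * n ^ 3) - 1 / (3 * (n + 1) ^ 3).
Proof.
  intro H.
  assert (E : 1 / (3 * n ^ 3) - 1 / (3 * (n + 1) ^ 3) - 1 / (n ^ 2 * (n + 1) ^ 2)
             = 1 / (3 * n ^ 3 * (n+1)^3)) by (field; lra).
  assert (0 < 1 / (3 * n ^ 3 * (n+1)^3)).
  { apply Rdiv_lt_0_compat; [lra|]. apply Rmult_lt_0_compat; [|apply pow_lt; lra].
    apply Rmult_lt_0_compat; [lra|apply pow_lt; lra]. }
  lra.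
Qed.

Lemma termL (n : R) : 1 <= n ->
  1 / (3 * n ^ 3) - 1 / n ^ 5 - (1 / (3 * (n + 1) ^ 3) - 1 / (n + 1) ^ 5)
   <= 1 / (n ^ 2 * (n + 1) ^ 2).
Proof.
  intro H.
  assert (E : 1 / (n ^ 2 * (n + 1) ^ 2) - (1 / (3 * n ^ 3) - 1 / n ^ 5 - (1 / (3 * (n + 1) ^ 3) - 1 / (n + 1) ^ 5))
             = (3 * ((n+1)^5 - n^5) - n^2*(n+1)^2) / (3 * n ^ 5 * (n+1)^5)) by (field; lra).
  assert (0 <= (3 * ((n+1)^5 - n^5) - n^2*(n+1)^2) / (3 * n ^ 5 * (n+1)^5)).
  { apply Rdiv_le_0_compat. nra. apply Rmult_lt_0_compat; [|apply pow_lt; lra].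
    apply Rmult_lt_0_compat; [lra|apply pow_lt; lra]. }
  lra.
Qed.

Definition aQ (Q : nat) (n : nat) : R :=
  if Nat.leb Q n then 1 / (INR n ^ 2 * (INR n + 1) ^ 2) else 0.

Lemma aQ_bounds (Q : nat) : (1 <= Q)%nat ->
  1 / (3 * INR Q ^ 3) - 1 / INR Q ^ 5 <= Series (aQ Q) <= 1 / (3 * INR Q ^ 3).
Proof.
  intro HQ.
  assert (HQr : 1 <= INR Q) by (apply le_INR in HQ; simpl in HQ; lra).
  set (hU := fun m : R => 1 / (3 * m ^ 3)).
  set (hL := fun m : R => 1 / (3 * m ^ 3) - 1 / m ^ 5).
  assert (SU := tele_series hU Q HQ).
  assert (SL := tele_series hL Q HQ).
  assert (HUb : forall m, 1 <= m -> Rabs (hU m) <= / m).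
  { intros m Hm. unfold hU. rewrite Rabs_pos_eq.
    2: { apply Rdiv_le_0_compat; [lra|]. apply Rmult_lt_0_compat; [lra|apply pow_lt; lra]. }
    unfold Rdiv. rewrite Rmult_1_l. apply Rinv_le_contravar; [lra|]. nra. }
  assert (HLb : forall m, 1 <= m -> Rabs (hL m) <= / m).
  { intros m Hm. unfold hL. apply Rabs_le.
    assert (0 < m ^ 3) by (apply pow_lt; lra).
    assert (m ^ 5 = m^3 * m^2) by ring.
    assert (1 <= m^2) by nra. assert (1 <= m^3) by nra. assert (1 <= m^5) by nra.
    assert (1 / (3 * m ^ 3) <= / m /\ 1 / m ^ 5 <= / m /\ 0 <= 1 / (3 * m ^ 3) /\ 0 <= 1/m^5).
    { repeat split.
      - unfold Rdiv. rewrite Rmult_1_l. apply Rinv_le_contravar; [lra|]. nra.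
      - unfold Rdiv. rewrite Rmult_1_l. apply Rinv_le_contravar; [lra|]. nra.
      - apply Rdiv_le_0_compat; lra.
      - apply Rdiv_le_0_compat; [lra|apply pow_lt; lra]. }
    lra. }
  specialize (SU HUb). specialize (SL HLb).
  set (bU := fun n => (if Nat.leb Q n then hU (INR n) else hU (INR Q)) -
                      (if Nat.leb Q (S n) then hU (INR (S n)) else hU (INR Q))) in SU.
  set (bL := fun n => (if Nat.leb Q n then hL (INR n) else hL (INR Q)) -
                      (if Nat.leb Q (S n) then hL (INR (S n)) else hL (INR Q))) in SL.
  assert (Hcase : forall (h : R -> R) n,
    (if Nat.leb Q n then h (INR n) else h (INR Q)) -
    (if Nat.leb Q (S n) then h (INR (S n)) else h (INR Q)) =
    if Nat.leb Q n then h (INR n) - h (INR n + 1) else 0).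
  { intros h n. destruct (Nat.leb Q n) eqn:E1.
    - apply Nat.leb_le in E1. assert (E2 : Nat.leb Q (S n) = true) by (apply Nat.leb_le; lia).
      rewrite E2, S_INR. reflexivity.
    - apply Nat.leb_gt in E1. destruct (Nat.leb Q (S n)) eqn:E2.
      + apply Nat.leb_le in E2. assert (S n = Q) by lia. subst Q. ring.
      + ring. }
  assert (HaU : forall n, 0 <= aQ Q n <= bU n).
  { intro n. unfold bU. rewrite Hcase. unfold aQ. destruct (Nat.leb Q n) eqn:E1; [|lra].
    apply Nat.leb_le in E1. apply le_INR in E1.
    split. apply Rdiv_le_0_compat; [lra|]. apply Rmult_lt_0_compat; apply pow_lt; lra.
    apply termU; lra. }
  assert (HaL : forall n, 0 <= aQ Q n - bL n).
  { intro n. unfold bL. rewrite Hcase. unfold aQ. destruct (Nat.leb Q n) eqn:E1; [|lra].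
    apply Nat.leb_le in E1. apply le_INR in E1. unfold hL.
    pose proof (termL (INR n) ltac:(lra)). lra. }
  assert (exU : ex_series bU) by (eexists; exact SU).
  assert (exL : ex_series bL) by (eexists; exact SL).
  assert (exa : ex_series (aQ Q)).
  { apply (ex_series_le (aQ Q) bU); [|exact exU].
    intro n. change (norm (aQ Q n)) with (Rabs (aQ Q n)). rewrite Rabs_pos_eq; apply HaU. }
  split.
  - assert (H1 : Series (fun _ => 0) <= Series (fun n => aQ Q n - bL n)).
    { apply Series_le. intro n. split; [lra|]. apply HaL.
      destruct exa as [la Hla]. destruct exL as [lb Hlb]. exists (la - lb).
      exact (is_series_minus _ _ _ _ Hla Hlb). }
    assert (Z : Series (fun _ : nat => 0) = 0).
    { rewrite (Series_ext _ (fun n => 0 * aQ Q n)) by (intro; ring).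
      rewrite Series_scal_l. ring. }
    rewrite Z in H1.
    rewrite Series_minus in H1 by assumption.
    rewrite (is_series_unique _ _ SL) in H1. unfold hL in H1. lra.
  - change (Series (aQ Q) <= hU (INR Q)). rewrite <- (is_series_unique _ _ SU). apply Series_le; assumption.
Qed.
Lemma core (w k q G : R) : 2 <= w^2 -> 0 < w -> w - 1 < k <= w + 1 -> 1 < k ->
  w^2/k - 1 < q <= w^2/k -> 1 <= q -> 1/(3*q^3) - 1/q^5 <= G <= 1/(3*q^3) ->
  Rabs (q + 2*w^2/q - w^4*G - 2*w - k + k^3/(3*w^2)) <= 1400/w.
Proof.
  intros Hw2 Hw Hk Hk1 Hq Hq1 HG.
  assert (Hw1 : 1 <= w) by nra.
  set (t := w^2/k) in *.
  assert (Htk : t * k = w^2) by (unfold t; field; lra).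
  assert (Ht : w/2 <= t) by nra.
  assert (Hqt : w/4 <= q) by lra.
  set (a := k/w). set (b := w/q). set (u := /w).
  assert (Hu : 0 < u <= 1). { unfold u. split. apply Rinv_0_lt_compat; lra.
     rewrite <- Rinv_1. apply Rinv_le_contravar; lra. }
  assert (Huw : u * w = 1) by (unfold u; field; lra).
  assert (Ha : a * w = k) by (unfold a; field; lra).
  assert (Hb : b * q = w) by (unfold b; field; lra).
  assert (Ha1 : Rabs (1 - a) <= u) by (apply Rabs_le; nra).
  assert (Ha2 : 0 < a <= 2) by nra.
  assert (Hb4 : 0 < b <= 4) by nra.
  assert (Hba : 0 <= b - a <= 8 * u).
  {
    assert (E : b - a = w * (t - q) / (t * q)) by (unfold b, a, t; field; nra).
    rewrite E. split. apply Rdiv_le_0_compat; nra.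
    apply Rle_div_l; [nra|].
    assert (w^2/8 <= t*q) by nra.
    assert (8*u*(t*q) >= u * w^2) by nra.
    assert (u * w^2 = w) by (replace (u*w^2) with ((u*w)*w) by ring; rewrite Huw; ring). nra. }
  set (Qf := -2*a + (a*b^2 + 2*a^2*b + 3*a^3)/3).
  assert (HQ : Rabs Qf <= 40).
  { assert (0 <= b^2 <= 16) by nra. assert (0 <= a^2 <= 4) by nra.
    assert (0 <= a*b^2 <= 32) by nra. assert (0 <= a^2*b <= 16) by nra.
    assert (0 <= a^3 <= 8) by nra.
    unfold Qf; apply Rabs_le; split; lra. }
  assert (E : q + 2*w^2/q - w^4*G - 2*w - k + k^3/(3*w^2) =
     -(t - q) * ((1 - a^2)^2 + (b - a) * Qf) + (k - w)^2/k + w^4*(1/(3*q^3) - G)).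
  { unfold Qf, a, b, t. field. lra. }
  rewrite E.
  assert (T2 : 0 <= (k - w)^2/k <= 2 * u).
  { split. apply Rdiv_le_0_compat; [apply pow2_ge_0|lra]. apply Rle_div_l; [lra|].
    assert ((k-w)^2 <= 1) by nra.
    assert (2*u*k >= 1) by nra. lra. }
  assert (T3 : 0 <= w^4*(1/(3*q^3) - G) <= 1024 * u).
  { assert (E3 : w^4 * (1/q^5) = b^5 * u) by (unfold b, u; field; lra).
    assert (0 <= b^5 <= 1024).
    { split. apply pow_le; lra. replace 1024 with (4^5) by ring. apply pow_incr; lra. }
    assert (0 <= w^4) by (apply pow_le; lra).
    split. apply Rmult_le_pos; lra.
    assert (w^4*(1/(3*q^3) - G) <= w^4 * (1/q^5)) by (apply Rmult_le_compat_l; lra).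
    assert (b^5*u <= 1024*u) by (apply Rmult_le_compat_r; lra).
    lra. }
  assert (T1 : Rabs ((1 - a^2)^2 + (b - a) * Qf) <= 329 * u).
  { assert (E1 : (1 - a^2)^2 = (1-a)^2 * (1+a)^2) by ring.
    apply Rabs_le_between in Ha1. destruct Ha1 as [Ha1a Ha1b].
    assert ((1-a)^2 <= u^2) by nra.
    assert (0 <= (1+a)^2 <= 9) by nra.
    assert (u^2 <= u) by nra.
    assert ((1-a)^2*(1+a)^2 <= u^2*9) by (apply Rmult_le_compat; try apply pow2_ge_0; lra).
    assert (0 <= (1-a)^2*(1+a)^2) by (apply Rmult_le_pos; apply pow2_ge_0).
    assert (HH : Rabs ((b-a)*Qf) <= 320*u).
    { rewrite Rabs_mult, (Rabs_pos_eq (b-a)) by lra.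
      assert ((b-a)*Rabs Qf <= (8*u)*40) by (apply Rmult_le_compat; try lra; apply Rabs_pos).
      lra. }
    apply Rabs_le_between in HH. apply Rabs_le; lra. }
  assert (Htq : 0 <= t - q <= 1) by lra.
  assert (Rabs (-(t - q) * ((1 - a^2)^2 + (b - a) * Qf)) <= 329 * u).
  { rewrite Rabs_mult, Rabs_Ropp, Rabs_pos_eq by lra.
    assert (0 <= Rabs ((1 - a^2)^2 + (b - a) * Qf)) by apply Rabs_pos. nra. }
  apply Rabs_le_between in H.
  unfold Rdiv. rewrite Rmult_1_l. fold u.
  apply Rabs_le. lra.
Qed.

Theorem proposition6 :
  exists C : R, 0 < C /\
  forall (d : Z) (x : R) (k : Z),
    0 < IZR d -> IZR d <= x / 2 ->
    (K d x - d < k)%Z -> (k <= K d x)%Z ->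
    let q := IZR (floorR (x / IZR k)) in
    Rabs ((IZR d ^ 2 * q + 2 * IZR d * x / q - x ^ 2 * F (x / IZR k))
          - (2 * IZR d * sqrt (IZR d * x) + IZR k * IZR d
             - IZR k ^ 3 / (3 * x)))
      <= C * (Rpower (IZR d) (5 / 2) * Rpower x (- (1 / 2))).
Proof.
  exists 1400. split; [lra|].
  intros d x k Hd0 Hdx HK1 HK2 q.
  set (D := IZR d) in *.
  assert (HD1 : 1 <= D).
  { unfold D. apply lt_IZR in Hd0. apply IZR_le. lia. }
  assert (Hx : 2 * D <= x) by lra.
  set (sr := sqrt (D ^ 2 + 4 * D * x)).
  assert (Hsr0 : 0 <= sr) by apply sqrt_pos.
  assert (Hsr2 : sr * sr = D ^ 2 + 4 * D * x) by (apply sqrt_sqrt; nra).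
  set (s := sqrt (D * x)).
  assert (Hs0 : 0 <= s) by apply sqrt_pos.
  assert (Hs2 : s * s = D * x) by (apply sqrt_sqrt; nra).
  assert (Hs1 : 0 < s) by nra.
  set (r := (D + sr) / 2).
  assert (HKr : IZR (K d x) <= r /\ IZR (K d x) - r > -1).
  { unfold K, floorR. apply base_Int_part. }
  assert (Hr1 : s <= r) by (unfold r; nra).
  assert (Hr2 : r <= s + D) by (unfold r; nra).
  assert (Hr3 : 2 * D <= r) by (unfold r; nra).
  assert (Hr4 : r <= x) by (unfold r; nra).
  assert (Hk1 : IZR k <= r).
  { apply IZR_le in HK2. lra. }
  assert (Hk2 : r - D < IZR k).
  { assert (IZR (K d x - d + 1) <= IZR k) by (apply IZR_le; lia).
    rewrite plus_IZR, minus_IZR in H. fold D in H. lra. }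
  set (w := s / D).
  assert (Hws : s = D * w) by (unfold w; field; lra).
  assert (Hw0 : 0 < w) by (unfold w; apply Rdiv_lt_0_compat; lra).
  assert (Hxw : x = D * w ^ 2) by (apply (Rmult_eq_reg_l D); [|lra]; nra).
  set (kk := IZR k / D).
  assert (Hkk : IZR k = D * kk) by (unfold kk; field; lra).
  assert (Hw2 : 2 <= w ^ 2) by nra.
  assert (Hkk1 : w - 1 < kk <= w + 1) by (split; nra).
  assert (Hkk2 : 1 < kk) by nra.
  set (t := x / IZR k).
  assert (Ht : t = w ^ 2 / kk) by (unfold t; rewrite Hxw, Hkk; field; nra).
  assert (Ht1 : 1 <= t).
  { unfold t. apply Rle_div_r; lra. }
  assert (Hq := base_Int_part t).
  fold (floorR t) in Hq. change (IZR (floorR t)) with q in Hq.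
  assert (Hq1 : 1 <= q).
  { assert (0 < q) by lra. unfold q in *. apply lt_IZR in H. apply IZR_le. lia. }
  set (Qn := Z.to_nat (floorR t)).
  assert (HQn : INR Qn = q).
  { unfold Qn, q. rewrite INR_IZR_INZ, Z2Nat.id; [reflexivity|].
    apply le_IZR. change (IZR (floorR t)) with q. simpl. lra. }
  assert (HQ1 : (1 <= Qn)%nat).
  { apply INR_le. rewrite HQn. simpl. lra. }
  assert (HF : F t = Series (aQ Qn)).
  { unfold F. apply Series_ext. intro n. unfold F_term, aQ.
    destruct (Rlt_dec (t - 1) (INR n)) as [H1|H1];
    destruct (Nat.leb Qn n) eqn:E.
    - apply Nat.leb_le in E. destruct (Nat.eqb n 0) eqn:E2.
      + apply Nat.eqb_eq in E2. lia.
      + reflexivity.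
    - apply Nat.leb_gt in E. exfalso.
      assert (INR n + 1 <= INR Qn) by (rewrite <- S_INR; apply le_INR; lia). lra.
    - apply Nat.leb_le in E. apply le_INR in E. exfalso. lra.
    - reflexivity. }
  assert (HG := aQ_bounds Qn HQ1).
  rewrite <- HF, HQn in HG.
  assert (Hcore := core w kk q (F t) Hw2 Hw0 Hkk1 Hkk2 ltac:(rewrite <- Ht; lra) Hq1 HG).
  fold t.
  assert (E : D ^ 2 * q + 2 * D * x / q - x ^ 2 * F t -
      (2 * D * s + IZR k * D - IZR k ^ 3 / (3 * x)) =
      D ^ 2 * (q + 2 * w ^ 2 / q - w ^ 4 * F t - 2 * w - kk + kk ^ 3 / (3 * w ^ 2))).
  { rewrite Hws, Hkk, Hxw. field. lra. }
  rewrite E, Rabs_mult, Rabs_pos_eq by nra.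
  assert (HP : Rpower D (5 / 2) * Rpower x (- (1 / 2)) = D ^ 2 / w).
  { replace (5 / 2) with (INR 2 + / 2) by (simpl; lra).
    replace (- (1 / 2)) with (- / 2) by field.
    rewrite Rpower_plus, Rpower_pow, Rpower_sqrt, Rpower_Ropp, Rpower_sqrt by lra.
    unfold w, s. rewrite sqrt_mult by lra.
    assert (Ha : sqrt D * sqrt D = D) by (apply sqrt_sqrt; lra).
    assert (0 < sqrt D) by (apply sqrt_lt_R0; lra).
    assert (0 < sqrt x) by (apply sqrt_lt_R0; lra).
    rewrite <- Ha at 5. field. split; lra. }
  rewrite HP.
  assert (0 < D^2) by nra.
  apply Rmult_le_compat_l with (r := D^2) in Hcore; [|lra].
  replace (1400 * (D ^ 2 / w)) with (D ^ 2 * (1400 / w)) by (field; lra).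
  exact Hcore.
Qed.
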